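(* Let $T$ be an admissible LCA-tree with $n$ leaves and let $z$ be a positive integer. Define sets of leaves $\mathbf{C}_0=\emptyset$ and, for $i=1,\dots,n$, $\mathbf{C}_i=\mathbf{C}_{i-1}\cup\{c_i\}$, where $c_i$ is any leaf not in $\mathbf{C}_{i-1}$ that maximizes the cost-decrease $\mathrm{Cost}_z(T,\mathbf{C}_{i-1})-\mathrm{Cost}_z(T,\mathbf{C}_{i-1}\cup\{c_i\})$ (equivalently, minimizes $\mathrm{Cost}_z(T,\mathbf{C}_{i-1}\cup\{c_i\})$; with the convention $\mathrm{Cost}_z(T,\emptyset)=+\infty$). Then for every $k\in\{1,\dots,n\}$, $\mathbf{C}_k$ minimizes $\mathrm{Cost}_z(T,\mathbf{C})$ over all sets $\mathbf{C}$ of $k$ distinct leaves of $T$.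
   Context: An LCA-tree is a finite rooted tree $T$ in which every node $\eta$ (leaves included) carries a real value $d(\eta)$; for leaves $\ell_i,\ell_j$, $d(\ell_i,\ell_j)=d(\ell_i\lor\ell_j)$, where $\ell_i\lor\ell_j$ is their lowest common ancestor ($\ell\lor\ell=\ell$). It is admissible if $d(\eta)\ge0$ for all nodes and $d(\eta)\le d(\mathrm{parent}(\eta))$ for every non-root node. For a set $\mathbf{C}$ of leaves, $\mathrm{Cost}_z(T,\mathbf{C})=\sum_{\ell\text{ leaf of }T}\min_{c\in\mathbf{C}} d(\ell,c)^z$. *)

(* Defs.v *)
From HB Require Import structures.
From mathcomp Require Import all_boot all_order all_algebra.
From mathcomp Require Import reals constructive_ereal.

Set Implicit Arguments.
Unset Strict Implicit.
Unset Printing Implicit Defensive.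
Import Order.TTheory GRing.Theory Num.Theory.
Local Open Scope ring_scope.
Local Open Scope ereal_scope.

Definition is_rooted_tree (V : finType) (parent : V -> V) (root : V) : Prop :=
  parent root = root /\ forall v : V, iter #|V| parent v = root.

Definition anc (V : finType) (parent : V -> V) (u v : V) : bool :=
  [exists k : 'I_#|V|.+1, iter k parent v == u].

(* v is a leaf: it has no child (the root is its own parent, not a child). *)
Definition leaf (V : finType) (parent : V -> V) (v : V) : bool :=
  [forall u : V, (parent u == v) ==> (u == v)].

Definition leaves (V : finType) (parent : V -> V) : {set V} :=
  [set v | leaf parent v].

(* lowest common ancestor: a common ancestor that is below every common
   ancestor (default root, never used in a rooted tree). *)
Definition lca (V : finType) (parent : V -> V) (root : V) (a b : V) : V :=
  odflt root [pick w | [&& anc parent w a, anc parent w b &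
     [forall u, (anc parent u a && anc parent u b) ==> anc parent u w]]].

Definition admissible (R : realType) (V : finType) (parent : V -> V) (root : V)
  (d : V -> R) : Prop :=
  (forall v, (0 <= d v)%R) /\ (forall v, v != root -> (d v <= d (parent v))%R).

Definition cost (R : realType) (V : finType) (parent : V -> V) (root : V)
  (d : V -> R) (z : nat) (C : {set V}) : \bar R :=
  \sum_(l in leaves parent) \big[mine/+oo]_(c in C) ((d (lca parent root l c)) ^+ z)%:E.

(* Main.v *)
Require Import Defs.
From HB Require Import structures.
From mathcomp Require Import all_boot all_order all_algebra.
From mathcomp Require Import reals constructive_ereal.
From mathcomp Require Import lra.
Import Order.TTheory GRing.Theory Num.Theory.
Local Open Scope ring_scope.

Definition mC (R : realType) (V : finType) (dl : V -> V -> R) (D : R) (l : V) (C : {set V}) : R :=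
  \big[Order.min/D]_(c in C) dl l c.

Arguments mC {R V}.

Lemma mC_D1 (R : realType) (V : finType) (dl : V -> V -> R) (D : R) (l : V) (C : {set V}) (x : V) :
  x \in C -> mC dl D l C = Order.min (dl l x) (mC dl D l (C :\ x)).
Proof.
move=> xC; rewrite /mC (@bigminD1 _ _ _ D x (fun c => c \in C)) //=; congr Order.min.
by apply: eq_bigl => c; rewrite !inE andbC.
Qed.

Lemma mC_U1 (R : realType) (V : finType) (dl : V -> V -> R) (D : R) (l : V) (C : {set V}) (x : V) :
  x \notin C -> mC dl D l (x |: C) = Order.min (dl l x) (mC dl D l C).
Proof.
move=> xC; rewrite (@mC_D1 _ _ dl D l _ x (setU11 x C)); congr Order.min.
congr mC; apply/setP => c; rewrite !inE.
by case: (eqVneq c x) => [->|]; rewrite ?(negPf xC).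
Qed.

Lemma mC_le (R : realType) (V : finType) (dl : V -> V -> R) (D : R) (l : V) (C : {set V}) (c : V) :
  c \in C -> mC dl D l C <= dl l c.
Proof. by move=> cC; apply: bigmin_le_cond. Qed.

Lemma mC_leD (R : realType) (V : finType) (dl : V -> V -> R) (D : R) (l : V) (C : {set V}) :
  mC dl D l C <= D.
Proof. exact: bigmin_le_id. Qed.

Lemma mC_ge (R : realType) (V : finType) (dl : V -> V -> R) (D : R) (l : V) (C : {set V}) (t : R) :
  t <= D -> (forall c, c \in C -> t <= dl l c) -> t <= mC dl D l C.
Proof. by move=> tD H; apply/bigmin_geP; split. Qed.

Lemma max_aux (R : realType) (t p q : R) : t <= Order.max p q -> p < t -> t <= q.
Proof. by rewrite le_max => /orP[tp|//] pt; move: (lt_le_trans pt tp); rewrite ltxx. Qed.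

Lemma min_cases (R : realType) (a b : R) :
  (Order.min a b = a /\ a <= b) \/ (Order.min a b = b /\ b < a).
Proof.
case: (leP a b) => h; [left; split=> //; exact: min_l | right; split=> //; exact: min_r (ltW h)].
Qed.

Ltac mc a b := let H := fresh in let H1 := fresh in
  destruct (@min_cases _ a b) as [[H H1]|[H H1]]; rewrite ?H; clear H.

Lemma real1 (R : realType) (a mX mY : R) :
  (a < mX -> mX <= mY) -> mX + Order.min a mY <= Order.min a mX + mY.
Proof.
move=> H; case: (ltP a mX) => h; [have := H h => h2|]; mc a mY; mc a mX; lra.
Qed.

Lemma real2 (R : realType) (a b mX mY : R) :
  (a < b -> b <= mX /\ b <= mY) -> (b < a -> a <= mX) ->
  Order.min b mX + Order.min a mY <= Order.min a mX + Order.min b mY.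
Proof.
move=> H H'; case: (ltgtP a b) => h.
- case: (H h) => h1 h2; mc b mX; mc a mY; mc a mX; mc b mY; lra.
- have h1 := H' h; mc b mX; mc a mY; mc a mX; mc b mY; lra.
- by rewrite h lexx.
Qed.

Arguments max_aux {R t p q}.
Arguments mC_le {R V dl D l C c}.

Lemma up_lem (R : realType) (V : finType) (dl : V -> V -> R)
  (ultra : forall a b c, dl a c <= Order.max (dl a b) (dl b c)) (x l c : V) :
  dl x l < dl x c -> dl x c <= dl l c.
Proof. by move=> h; apply: (max_aux (ultra x l c) h). Qed.

Lemma leafA (R : realType) (V : finType) (dl : V -> V -> R) (D : R)
  (sym : forall a b, dl a b = dl b a)
  (ultra : forall a b c, dl a c <= Order.max (dl a b) (dl b c))
  (bound : forall a b, dl a b <= D) (l x : V) (X Y : {set V}) :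
  x \in X -> x \notin Y -> mC dl D x (X :\ x) <= mC dl D x Y ->
  mC dl D l (X :\ x) + mC dl D l (x |: Y) <= mC dl D l X + mC dl D l Y.
Proof.
move=> xX xY hXY.
rewrite (@mC_D1 _ _ dl D l _ x xX) (@mC_U1 _ _ dl D l _ x xY).
apply: real1 => h.
have hX : mC dl D l (X :\ x) <= mC dl D x (X :\ x).
  apply: mC_ge; first exact: mC_leD.
  move=> c cX; apply: (max_aux _ h).
  exact: le_trans (mC_le cX) (ultra l x c).
apply: mC_ge; first exact: mC_leD.
move=> y yY.
have t1 : mC dl D l (X :\ x) <= dl x y.
  exact: le_trans hX (le_trans hXY (mC_le yY)).
apply: (le_trans t1); apply: up_lem => //.
by rewrite sym; apply: lt_le_trans h t1.
Qed.

Lemma leafB (R : realType) (V : finType) (dl : V -> V -> R) (D : R)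
  (sym : forall a b, dl a b = dl b a)
  (ultra : forall a b c, dl a c <= Order.max (dl a b) (dl b c))
  (bound : forall a b, dl a b <= D) (l x y : V) (X Y : {set V}) :
  x \in X -> x \notin Y -> y \in Y -> y \notin X ->
  dl x y = mC dl D x Y -> mC dl D x Y < mC dl D x (X :\ x) ->
  mC dl D l (y |: (X :\ x)) + mC dl D l (x |: (Y :\ y)) <= mC dl D l X + mC dl D l Y.
Proof.
move=> xX xY yY yX exy hlt.
have yX' : y \notin X :\ x by rewrite !inE negb_and yX orbT.
have xY' : x \notin Y :\ y by rewrite !inE negb_and xY orbT.
rewrite (@mC_U1 _ _ dl D l _ y yX') (@mC_U1 _ _ dl D l _ x xY').
rewrite (@mC_D1 _ _ dl D l _ x xX) (@mC_D1 _ _ dl D l _ y yY).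
have fX : forall c, c \in X :\ x -> dl x y < dl x c.
  by move=> c cX; rewrite exy; apply: lt_le_trans hlt (mC_le cX).
have fY : forall c, c \in Y :\ y -> dl x y <= dl x c.
  move=> c; rewrite inE => /andP[_ cY]; rewrite exy; exact: mC_le.
apply: real2 => h.
- have hb : dl l y <= dl x y.
    apply: (max_aux _ h); exact: ultra.
  split.
  + apply: mC_ge; first exact: bound.
    move=> c cX; 
    apply: le_trans (ltW (le_lt_trans hb (fX c cX))) _.
    apply: up_lem => //; rewrite sym; apply: lt_trans h _.
    exact: le_lt_trans hb (fX c cX).
  + apply: mC_ge; first exact: bound.
    move=> c cX; apply: le_trans (le_trans hb (fY c cX)) _.
    apply: up_lem => //; rewrite sym; apply: lt_le_trans h _.
    exact: le_trans hb (fY c cX).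
- have ha : dl l x <= dl x y.
    apply: (max_aux _ h); rewrite [dl x y]sym; exact: ultra.
  apply: mC_ge; first exact: bound.
  move=> c cX; apply: le_trans (ltW (le_lt_trans ha (fX c cX))) _.
  apply: up_lem => //; rewrite sym; exact: le_lt_trans ha (fX c cX).
Qed.

Definition Phi (R : realType) (V : finType) (dl : V -> V -> R) (D : R)
  (L C : {set V}) : R := \sum_(l in L) mC dl D l C.

Arguments Phi {R V}.

Lemma exch (R : realType) (V : finType) (dl : V -> V -> R) (D : R)
  (sym : forall a b, dl a b = dl b a)
  (ultra : forall a b c, dl a c <= Order.max (dl a b) (dl b c))
  (bound : forall a b, dl a b <= D) (L : {set V}) (x : V) (X Y : {set V}) :
  x \in X -> x \notin Y ->
  (Phi dl D L (X :\ x) + Phi dl D L (x |: Y) <= Phi dl D L X + Phi dl D L Y) \/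
  (exists y, [/\ y \in Y, y \notin X &
     Phi dl D L (y |: (X :\ x)) + Phi dl D L (x |: (Y :\ y)) <= Phi dl D L X + Phi dl D L Y]).
Proof.
move=> xX xY; case: (leP (mC dl D x (X :\ x)) (mC dl D x Y)) => h.
  left; rewrite /Phi -!big_split /=; apply: ler_sum => l _; exact: leafA.
right; case: (set_0Vmem Y) => [Y0|[y0 y0Y]].
  have : mC dl D x Y = D by rewrite Y0 /mC big_set0.
  move=> e; rewrite e in h; have := @mC_leD _ _ dl D x (X :\ x).
  by rewrite leNgt h.
have [y yY ey] := @eq_bigmin _ _ _ D y0 (fun c => c \in Y) (dl x) y0Y (fun i _ => bound x i).
have yX : y \notin X.
  apply/negP => yX.
  have yx : y != x by apply/eqP => e; rewrite -e yY in xY.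
  have : mC dl D x (X :\ x) <= dl x y by apply: mC_le; rewrite !inE yx yX.
  by rewrite /mC -ey; rewrite leNgt h.
exists y; split => //.
rewrite /Phi -!big_split /=; apply: ler_sum => l _; apply: leafB => //.
Qed.

Lemma greedy (R : realType) (V : finType) (dl : V -> V -> R) (D : R)
  (sym : forall a b, dl a b = dl b a)
  (ultra : forall a b c, dl a c <= Order.max (dl a b) (dl b c))
  (bound : forall a b, dl a b <= D) (L : {set V}) (G : nat -> {set V}) :
  G 0%N = set0 ->
  (forall i : nat, (1 <= i <= #|L|)%N ->
     exists c : V, [/\ c \in L, c \notin G i.-1, G i = c |: G i.-1 &
       forall c' : V, c' \in L -> c' \notin G i.-1 ->
         Phi dl D L (c |: G i.-1) <= Phi dl D L (c' |: G i.-1)]) ->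
  forall k, (k <= #|L|)%N ->
    [/\ G k \subset L, #|G k| = k &
      forall C : {set V}, C \subset L -> #|C| = k -> Phi dl D L (G k) <= Phi dl D L C].
Proof.
move=> G0 Hgr; elim=> [|k IH] hk.
  rewrite G0 sub0set cards0; split => // C _ /cards0_eq ->; exact: lexx.
have [GL Gc Gopt] := IH (ltnW hk).
have [c [cL cG GS Hc]] := Hgr k.+1 ltac:(by rewrite hk).
rewrite /= in cG GS Hc.
split.
- by rewrite GS subUset sub1set cL GL.
- by rewrite GS cardsU1 cG Gc.
suff H : forall (m : nat) (C : {set V}), C \subset L -> #|C| = k.+1 -> (#|C :\: G k| <= m)%N ->
    Phi dl D L (G k.+1) <= Phi dl D L C.
  by move=> C CL Cc; apply: (H _ C CL Cc (leqnn _)).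
elim=> [|m IHm] C CL Cc Cm.
all: have [x xC xG] : exists2 x, x \in C & x \notin G k.
all: try (apply/subsetPn; apply/negP => CG; have := subset_leq_card CG; by rewrite Cc Gc ltnn).
- have h0 : (0 < #|C :\: G k|)%N by apply/card_gt0P; exists x; rewrite inE xG xC.
  by rewrite leqNgt h0 in Cm.
have xL : x \in L by apply: (subsetP CL).
case: (@exch _ _ dl D sym ultra bound L x C (G k) xC xG) => [h|[y [yG yC h]]].
- have s1 : #|C :\ x| = k.
    by move: (cardsD1 x C); rewrite xC Cc add1n => -[e]; rewrite [in RHS]e.
  have h1 := Gopt (C :\ x) (subset_trans (subD1set C x) CL) s1.
  have h2 := Hc x xL xG; rewrite -GS in h2.
  lra.
- have xG' : x \notin G k :\ y by rewrite !inE negb_and xG orbT.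
  have yC' : y \notin C :\ x by rewrite !inE negb_and yC orbT.
  have t1 : x |: (G k :\ y) \subset L.
    by rewrite subUset sub1set xL (subset_trans (subD1set (G k) y) GL).
  have t2 : #|x |: (G k :\ y)| = k.
    by rewrite cardsU1 xG'; move: (cardsD1 y (G k)); rewrite yG Gc => e; rewrite [in RHS]e.
  have h1 := Gopt _ t1 t2.
  have e : (y |: (C :\ x)) :\: G k = (C :\: G k) :\ x.
    apply/setP => u; rewrite !inE.
    case: (eqVneq u y) => [->|uy]; first by rewrite yG /= ?andbF.
    by rewrite /= andbCA.
  have s1 : y |: (C :\ x) \subset L.
    by rewrite subUset sub1set (subsetP GL y yG) (subset_trans (subD1set C x) CL).
  have s2 : #|y |: (C :\ x)| = k.+1.
    by rewrite cardsU1 yC'; move: (cardsD1 x C); rewrite xC Cc => e2; rewrite [in RHS]e2.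
  have s3 : (#|(y |: (C :\ x)) :\: G k| <= m)%N.
    have xCG : x \in C :\: G k by rewrite inE xC xG.
    by move: Cm; rewrite e (cardsD1 x (C :\: G k)) xCG add1n ltnS.
  have h3 := IHm _ s1 s2 s3.
  lra.
Qed.


Lemma iter_root (V : finType) (parent : V -> V) (root : V) :
  is_rooted_tree parent root -> forall n v, (#|V| <= n)%N -> iter n parent v = root.
Proof.
case=> pr Hr n v h; rewrite -(subnK h) iterD Hr; exact: iter_fix.
Qed.
Arguments iter_root {V parent root} T {n v}.


Lemma ancP (V : finType) (parent : V -> V) (root : V) :
  is_rooted_tree parent root -> forall u v,
  reflect (exists n, iter n parent v = u) (anc parent u v).
Proof.
move=> T u v; apply: (iffP existsP) => [[k /eqP e]|[n e]]; first by exists k.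
case: (leqP n #|V|) => h.
  by exists (inord n); rewrite inordK ?ltnS // e.
exists ord_max; rewrite /= (iter_root T (leqnn _)) -e (iter_root T (ltnW h)).
by [].
Qed.
Arguments ancP {V parent root}.


Lemma anc_trans (V : finType) (parent : V -> V) (root : V) :
  is_rooted_tree parent root -> forall u v w,
  anc parent u v -> anc parent v w -> anc parent u w.
Proof.
move=> T u v w /(ancP T) [n1 e1] /(ancP T) [n2 e2].
by apply/(ancP T); exists (n1 + n2)%N; rewrite iterD e2 e1.
Qed.
Arguments anc_trans {V parent root}.


Lemma anc_root (V : finType) (parent : V -> V) (root : V) :
  is_rooted_tree parent root -> forall v, anc parent root v.
Proof. by move=> T v; apply/(ancP T); exists #|V|; rewrite (iter_root T). Qed.
Arguments anc_root {V parent root}.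


Lemma anc_d (R : realType) (V : finType) (parent : V -> V) (root : V) (d : V -> R) :
  is_rooted_tree parent root -> admissible parent root d ->
  forall u v, anc parent u v -> d v <= d u.
Proof.
move=> T [_ adm] u v /(ancP T) [n <-]; elim: n => [|n IH] /=; first exact: lexx.
apply: le_trans IH _; case: (eqVneq (iter n parent v) root) => [->|ne].
  by case: T => -> _; exact: lexx.
exact: adm.
Qed.
Arguments anc_d {R V parent root d}.


Lemma lca_spec (V : finType) (parent : V -> V) (root : V) :
  is_rooted_tree parent root -> forall a b,
  [/\ anc parent (lca parent root a b) a, anc parent (lca parent root a b) b &
    forall u, anc parent u a -> anc parent u b -> anc parent u (lca parent root a b)].
Proof.
move=> T a b.
have ex : exists n, anc parent (iter n parent a) b.
  by exists #|V|; rewrite (iter_root T) // (anc_root T).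
case: (ex_minnP ex) => k0 Hk0 Hmin.
set w := iter k0 parent a.
have Pw : [&& anc parent w a, anc parent w b &
     [forall u, (anc parent u a && anc parent u b) ==> anc parent u w]].
  apply/and3P; split => //; first by apply/(ancP T); exists k0.
  apply/forallP => u; apply/implyP => /andP[/(ancP T)[j e] ub].
  have hj := Hmin j ltac:(by rewrite e).
  by apply/(ancP T); exists (j - k0)%N; rewrite /w -iterD subnK.
rewrite /lca; case: pickP => [w' /and3P[h1 h2 /forallP h3] | H]; last first.
  by have := H w; rewrite Pw.
split=> // u ua ub; apply: (implyP (h3 u)); by rewrite ua ub.
Qed.
Arguments lca_spec {V parent root}.


Lemma lca_sym (V : finType) (parent : V -> V) (root : V) a b :
  lca parent root a b = lca parent root b a.
Proof.
rewrite /lca; congr odflt; apply: eq_pick => w /=; rewrite andbCA.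
by congr (_ && (_ && _)); apply: eq_forallb => u; rewrite andbC.
Qed.

Lemma powmono (R : realType) (z : nat) (x y : R) : 0 <= x -> x <= y -> x ^+ z <= y ^+ z.
Proof.
move=> hx hxy; apply: lerXn2r => //; rewrite nnegrE //; exact: le_trans hx hxy.
Qed.

Lemma ultra_lca (R : realType) (V : finType) (parent : V -> V) (root : V) (d : V -> R) (z : nat) :
  is_rooted_tree parent root -> admissible parent root d -> forall a b c,
  d (lca parent root a c) ^+ z <=
    Order.max (d (lca parent root a b) ^+ z) (d (lca parent root b c) ^+ z).
Proof.
move=> T adm a b c.
have d0 : forall v, 0 <= d v by case: adm.
have [a1 a2 a3] := lca_spec T a b.
have [b1 b2 b3] := lca_spec T b c.
have [c1 c2 c3] := lca_spec T a c.
have [i e1] := ancP T _ _ a2.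
have [j e2] := ancP T _ _ b1.
rewrite le_max; apply/orP; case: (leqP i j) => h.
- right; apply: powmono => //; apply: (anc_d T adm); apply: c3 => //.
  apply: (anc_trans T) a1; apply/(ancP T); exists (j - i)%N.
  by rewrite -e1 -iterD subnK.
- left; apply: powmono => //; apply: (anc_d T adm); apply: c3 => //.
  apply: (anc_trans T) b2; apply/(ancP T); exists (i - j)%N.
  by rewrite -e2 -iterD subnK // ltnW.
Qed.


Local Open Scope ereal_scope.

Lemma conv_cost (R : realType) (V : finType) (parent : V -> V) (root : V)
  (d : V -> R) (z : nat) (D : R) (C : {set V}) :
  (forall a b, (d (lca parent root a b) ^+ z <= D)%R) -> C != set0 ->
  cost parent root d z C =
  (Phi (fun a b => d (lca parent root a b) ^+ z)%R D (leaves parent) C)%:E.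
Proof.
move=> bnd /set0Pn [c0 c0C].
rewrite /cost /Phi -sumEFin; apply: eq_bigr => l _.
have [c1 c1C e] := @eq_bigmin _ _ _ D c0 (fun c => c \in C)
  (fun c => d (lca parent root l c) ^+ z)%R c0C (fun i _ => bnd l i).
apply: le_anti; apply/andP; split.
  rewrite /mC e; exact: bigmin_le_cond.
apply/bigmin_geP; split; first exact: leey.
by move=> c cC; rewrite lee_fin; apply: mC_le.
Qed.

Theorem mainTheorem6 (R : realType) (V : finType) (parent : V -> V) (root : V)
  (d : V -> R) (z : nat) (Cs : nat -> {set V}) :
  is_rooted_tree parent root ->
  admissible parent root d ->
  (0 < z)%N ->
  Cs 0%N = set0 ->
  (forall i : nat, (1 <= i <= #|leaves parent|)%N ->
     exists c : V, [/\ c \in leaves parent, c \notin Cs i.-1,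
       Cs i = c |: Cs i.-1 &
       forall c' : V, c' \in leaves parent -> c' \notin Cs i.-1 ->
         cost parent root d z (c |: Cs i.-1) <= cost parent root d z (c' |: Cs i.-1)]) ->
  forall k : nat, (1 <= k <= #|leaves parent|)%N ->
    [/\ Cs k \subset leaves parent, #|Cs k| = k &
      forall C : {set V}, C \subset leaves parent -> #|C| = k ->
        cost parent root d z (Cs k) <= cost parent root d z C].
Proof.
move=> Tr adm _ C0 Hgr k /andP[k1 kn].
pose dl := (fun a b => d (lca parent root a b) ^+ z)%R.
pose D := (d root ^+ z)%R.
have d0 : forall v, (0 <= d v)%R by case: adm.
have bnd : forall a b, (dl a b <= D)%R.
  by move=> a b; apply: powmono => //; apply: (anc_d Tr adm); apply: (anc_root Tr).
have sym : forall a b, dl a b = dl b a by move=> a b; rewrite /dl lca_sym.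
have ult : forall a b c, (dl a c <= Order.max (dl a b) (dl b c))%R.
  by move=> a b c; apply: ultra_lca.
have cv : forall C : {set V}, C != set0 ->
    cost parent root d z C = (Phi dl D (leaves parent) C)%:E.
  by move=> C; apply: conv_cost.
have ne1 : forall c (C : {set V}), c |: C != set0.
  by move=> c C; apply/set0Pn; exists c; rewrite setU11.
have := @greedy _ _ dl D sym ult bnd (leaves parent) Cs C0.
case/(_ _ k kn) => [i hi|GL Gc Gopt].
  have [c [c1 c2 c3 c4]] := Hgr i hi.
  exists c; split => // c' c'L c'G.
  by have := c4 c' c'L c'G; rewrite !cv // lee_fin.
have neC : forall C : {set V}, #|C| = k -> C != set0.
  by move=> C Cc; rewrite -cards_eq0 Cc -lt0n.
split=> // C CL Cc.
by rewrite !cv ?neC // lee_fin; apply: Gopt.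
Qed.
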